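(* Let $(V,\|\cdot\|_V)$, $(\mathcal V,\|\cdot\|_{\mathcal V})$, $(W,\|\cdot\|_W)$, $(\mathcal W,\|\cdot\|_{\mathcal W})$ be normed real vector spaces with $V\subseteq\mathcal V$ continuously and $W\subseteq\mathcal W$ continuously, and let $\epsilon,\theta\in[0,\infty)$, $\varepsilon,\vartheta\in(0,\infty)$ and $F\colon V\to W$ satisfy for all $v,w\in V$ that $\|F(v)-F(w)\|_W\le\epsilon(1+\|v\|_{\mathcal V}^\varepsilon+\|w\|_{\mathcal V}^\varepsilon)\|v-w\|_{\mathcal V}$, $\vartheta=2\varepsilon$, and $$\theta=\max\Big\{3\epsilon^2\Big[\sup_{u\in W\setminus\{0\}}\tfrac{\|u\|_{\mathcal W}^2}{\|u\|_W^2}\Big]\Big[1+\sup_{u\in V\setminus\{0\}}\tfrac{\|u\|_{\mathcal V}^{2\varepsilon}}{\|u\|_V^{2\varepsilon}}\Big](1+2^{\max\{2\varepsilon-1,0\}}),\ (8\epsilon^2+2\|F(0)\|_W^2)\max\Big\{1,\sup_{u\in V\setminus\{0\}}\tfrac{\|u\|_{\mathcal V}^{2+2\varepsilon}}{\|u\|_V^{2+2\varepsilon}}\Big\}\Big\}.$$ Then for all $v,w\in V$ it holds that $\|F(v)\|_W^2\le\theta\max\{1,\|v\|_V^{2+\vartheta}\}$ and $$\|F(v)-F(w)\|_{\mathcal W}^2\le\theta\max\{1,\|v\|_V^\vartheta\}\|v-w\|_{\mathcal V}^2+\theta\|v-w\|_{\mathcal V}^{2+\vartheta}.$$ *)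

(* Defs.v *)
From HB Require Import structures.
From mathcomp Require Import all_boot all_order all_algebra.
From mathcomp Require Import all_classical all_reals all_analysis.
Set Implicit Arguments. Unset Strict Implicit. Unset Printing Implicit Defensive.
Import Order.TTheory GRing.Theory Num.Theory.
Import numFieldNormedType.Exports.
Local Open Scope classical_set_scope.
Local Open Scope ring_scope.

(* For a (continuous, linear) inclusion i : X -> Y of normed spaces,
   emb_sup i p = sup_{u in X \ {0}} ||i u||_Y^p / ||u||_X^p
   (real supremum; for X = {0} the set is empty and mathcomp's sup gives 0). *)
Definition emb_sup {R : realType} {X Y : normedModType R} (i : X -> Y) (p : R) : R :=
  sup [set (`|i u| `^ p) / (`|u| `^ p) | u in [set u : X | u != 0]].

(* Main.v *)
Require Import Defs.
From HB Require Import structures.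
From mathcomp Require Import all_boot all_order all_algebra.
From mathcomp Require Import all_classical all_reals all_analysis.
Import Order.TTheory GRing.Theory Num.Theory.
Import numFieldNormedType.Exports.
Local Open Scope classical_set_scope.
Local Open Scope ring_scope.

From mathcomp Require Import ring lra.

Lemma emb_bound {R : realType} {X Y : normedModType R} {i : {linear X -> Y}}
  (ic : continuous i) (p : R) (p0 : 0 < p) :
  0 <= emb_sup i p /\ forall u, `|i u| `^ p <= emb_sup i p * `|u| `^ p.
Proof.
have [r r0 Hr] := pinfty_ex_gt0 ((linear_boundedP i).1 ((linear_bounded_continuous i).2 ic)).
have ub : has_ubound [set (`|i u| `^ p) / (`|u| `^ p) | u in [set u : X | u != 0]].
  exists (r `^ p) => _ [u /= u0 <-].
  have up : 0 < `|u| `^ p by rewrite powR_gt0 // normr_gt0.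
  rewrite ler_pdivrMr // -powRM ?normr_ge0 ?(ltW r0) //.
  apply: (ge0_ler_powR (ltW p0)); rewrite ?nnegrE ?mulr_ge0 ?normr_ge0 ?(ltW r0) //; exact: Hr.
have key : forall u, u != 0 -> `|i u| `^ p <= emb_sup i p * `|u| `^ p.
  move=> u u0.
  have up : 0 < `|u| `^ p by rewrite powR_gt0 // normr_gt0.
  rewrite -ler_pdivrMr //; apply: ub_le_sup => //; by exists u.
split.
  have [[u u0]|nz] := pselect (exists u : X, u != 0).
    have := key u u0; have up : 0 < `|u| `^ p by rewrite powR_gt0 // normr_gt0.
    rewrite -ler_pdivrMr // => H; apply: le_trans H; by rewrite divr_ge0 ?powR_ge0.
  rewrite /emb_sup.
  suff -> : [set (`|i u| `^ p) / (`|u| `^ p) | u in [set u : X | u != 0]] = set0 by rewrite sup0.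
  apply/seteqP; split => // _ [u /= u0 _]; apply: nz; by exists u.
move=> u; have [->|u0] := eqVneq u 0; last exact: key.
by rewrite linear0 !normr0 powR0 ?gt_eqF // mulr0.
Qed.

Lemma half_convex (R : realType) (a d q : R) : 1 <= q -> 0 <= a -> 0 <= d ->
  (2^-1 * a + 2^-1 * d) `^ q <= 2^-1 * a `^ q + 2^-1 * d `^ q.
Proof.
move=> p1 a0 d0.
rewrite {2 4}(_ : 2^-1 = 1 - 2^-1); last by rewrite {2}(splitr 1) div1r addrK.
by apply: (convex_powR p1 (Itv01 _ _)) => //=;
  rewrite ?inE/= ?in_itv/= ?a0 ?d0// ?invr_ge0// invf_le1 ?ler1n.
Qed.

Lemma powR_sub (R : realType) (a d q : R) : 0 < q -> q < 1 -> 0 <= a -> 0 <= d ->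
  (a + d) `^ q <= a `^ q + d `^ q.
Proof.
move=> q0 q1 a0 d0.
have [s0|sp] := eqVneq (a + d) 0.
  by rewrite s0 powR0 ?gt_eqF // addr_ge0 ?powR_ge0.
have s0 : 0 < a + d by rewrite lt_neqAle eq_sym sp addr_ge0.
have ha : a = (a / (a + d)) * (a + d) by rewrite divfK.
have hd : d = (d / (a + d)) * (a + d) by rewrite divfK.
have key : forall x, 0 <= x -> x <= a + d -> x / (a + d) <= (x / (a + d)) `^ q.
  move=> x x0 xs.
  have [->|xp] := eqVneq x 0; first by rewrite mul0r powR0 ?gt_eqF.
  apply: ger1_powR; last exact: ltW.
  apply/andP; split; [apply: divr_gt0 => //; rewrite lt_neqAle eq_sym xp // | rewrite ler_pdivrMr // mul1r //].
have Ea : a `^ q = (a / (a + d)) `^ q * (a + d) `^ q.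
  by rewrite -powRM ?divfK ?divr_ge0 // ltW.
have Ed : d `^ q = (d / (a + d)) `^ q * (a + d) `^ q.
  by rewrite -powRM ?divfK ?divr_ge0 // ltW.
rewrite Ea Ed -mulrDl.
rewrite -{1}(mul1r ((a + d) `^ q)) ler_wpM2r ?powR_ge0 //.
have e1 : 1 = a / (a + d) + d / (a + d) by rewrite -mulrDl divff.
rewrite {1}e1; apply: lerD; apply: key => //; lra.
Qed.

Lemma powR_conv (R : realType) (a d q : R) : 0 < q -> 0 <= a -> 0 <= d ->
  (a + d) `^ q <= 2 `^ (Num.max (q - 1) 0) * (a `^ q + d `^ q).
Proof.
move=> q0 a0 d0.
have [q1|q1] := ltP q 1.
  have -> : Num.max (q - 1) 0 = 0 by apply/max_idPr; lra.
  by rewrite powRr0 mul1r powR_sub.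
have -> : Num.max (q - 1) 0 = q - 1 by apply/max_idPl; lra.
have -> : a + d = 2 * (2^-1 * a + 2^-1 * d) by rewrite mulrDr !mulrA divff ?mul1r.
rewrite powRM //; last by lra.
have -> : 2 `^ (q - 1) = 2 `^ q * 2^-1 :> R.
  by rewrite powRD ?pnatr_eq0 ?implybT // powRN powRr1.
rewrite -mulrA ler_wpM2l ?powR_ge0 //.
by rewrite mulrDr; apply: half_convex.
Qed.

Theorem lemma2p4 (R : realType) (V VV W WW : normedModType R)
  (iV : {linear V -> VV}) (iW : {linear W -> WW})
  (iV_inj : injective iV) (iV_cont : continuous iV)
  (iW_inj : injective iW) (iW_cont : continuous iW)
  (eps theta veps vtheta : R) (F : V -> W)
  (eps_ge0 : 0 <= eps) (theta_ge0 : 0 <= theta)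
  (veps_gt0 : 0 < veps) (vtheta_gt0 : 0 < vtheta)
  (HF : forall v w : V, `|F v - F w| <=
          eps * (1 + `|iV v| `^ veps + `|iV w| `^ veps) * `|iV (v - w)|)
  (Hvtheta : vtheta = 2 * veps)
  (Htheta : theta = Num.max
     (3 * eps ^+ 2 * emb_sup iW 2 * (1 + emb_sup iV (2 * veps))
        * (1 + 2 `^ (Num.max (2 * veps - 1) 0)))
     ((8 * eps ^+ 2 + 2 * `|F 0| ^+ 2) * Num.max 1 (emb_sup iV (2 + 2 * veps)))) :
  forall v w : V,
    `|F v| ^+ 2 <= theta * Num.max 1 (`|v| `^ (2 + vtheta)) /\
    `|iW (F v - F w)| ^+ 2 <=
      theta * Num.max 1 (`|v| `^ vtheta) * `|iV (v - w)| ^+ 2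
      + theta * `|iV (v - w)| `^ (2 + vtheta).

Proof.
move=> v w.
have two0 : (0:R) < 2 by [].
have [EW0 HW] := emb_bound iW_cont _ two0.
have q0 : 0 < 2 * veps by rewrite mulr_gt0.
have [EV0 HV] := emb_bound iV_cont _ q0.
have m0 : 0 < 2 + 2 * veps by rewrite addr_gt0.
have [EM0 HM] := emb_bound iV_cont _ m0.
subst vtheta.
set q := 2 * veps in q0 HV EV0 Htheta *.
set EW := emb_sup iW 2 in EW0 HW Htheta.
set EV := emb_sup iV q in EV0 HV Htheta.
set EM := emb_sup iV (2 + q) in EM0 HM Htheta.
set c := 2 `^ Num.max (q - 1) 0 in Htheta.
have c1 : 1 <= c.
  have hm : 0 <= Num.max (q - 1) 0 by rewrite le_max lexx orbT.
  have h12 : (1:R) <= 2 by rewrite ler1n.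
  have := @ler_powR R 2 h12 _ _ hm.
  by rewrite powRr0.
have sq : forall x : R, 0 <= x -> (x `^ veps) ^+ 2 = x `^ q.
  by move=> x x0; rewrite /q mulrC powRrM powR_mulrn ?powR_ge0.
have pD : forall x : R, 0 <= x -> x `^ q * x ^+ 2 = x `^ (2 + q).
  move=> x x0; rewrite (addrC 2 q) powRD ?powR_mulrn //.
  by rewrite addrC (gt_eqF m0).
have hT1 : 3 * eps ^+ 2 * EW * (1 + EV) * (1 + c) <= theta by rewrite Htheta le_max lexx.
have hT2 : (8 * eps ^+ 2 + 2 * `|F 0| ^+ 2) * Num.max 1 EM <= theta.
  by rewrite Htheta le_max lexx orbT.
set a := `|iV v|.
have a0 : 0 <= a by apply: normr_ge0.
split.
  set f0 := `|F 0|.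
  set A := a `^ (2 + q).
  set N := `|v| `^ (2 + q).
  set M := Num.max 1 N.
  set P := Num.max 1 EM.
  have h1 : `|F v| <= f0 + eps * (1 + a `^ veps) * a.
    have := HF v 0.
    rewrite subr0 linear0 normr0 powR0 ?(gt_eqF veps_gt0) // addr0 => H.
    have -> : F v = (F v - F 0) + F 0 by rewrite subrK.
    by rewrite (le_trans (ler_normD _ _)) // addrC lerD2l.
  have h2 : `|F v| ^+ 2 <= 2 * f0 ^+ 2 + 2 * eps ^+ 2 * ((1 + a `^ veps) ^+ 2 * a ^+ 2).
    have sv0 : 0 <= 1 + a `^ veps by rewrite addr_ge0 ?powR_ge0.
    have X0 : 0 <= eps * (1 + a `^ veps) * a by rewrite !mulr_ge0.
    have F0 : 0 <= f0 by apply: normr_ge0.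
    apply: (le_trans (lerXn2r 2 _ _ h1)); rewrite ?nnegrE //; first by rewrite addr_ge0.
    have -> : 2 * eps ^+ 2 * ((1 + a `^ veps) ^+ 2 * a ^+ 2) = 2 * (eps * (1 + a `^ veps) * a) ^+ 2.
      by rewrite !exprMn !mulrA.
    set X := eps * (1 + a `^ veps) * a.
    have := sqr_ge0 (f0 - X); nra.
  have h3 : (1 + a `^ veps) ^+ 2 * a ^+ 2 <= 2 * (a ^+ 2 + A).
    rewrite /A -pD // -sq //.
    have := sqr_ge0 (1 - a `^ veps); have := sqr_ge0 a; nra.
  have h4 : a ^+ 2 <= Num.max 1 A.
    have [a1|a1] := leP a 1.
      rewrite le_max; apply/orP; left; rewrite expr_le1 //.
    rewrite le_max; apply/orP; right.
    rewrite /A -powR_mulrn //; apply: ler_powR; [exact: ltW | lra].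
  have h5 : Num.max 1 A <= P * M.
    have P1 : 1 <= P by rewrite le_max lexx.
    have M1 : 1 <= M by rewrite le_max lexx.
    rewrite ge_max; apply/andP; split.
      by rewrite -(mulr1 1) ler_pM.
    apply: (le_trans (HM v)); rewrite ler_pM // ?le_max ?lexx ?orbT //.
  have P1 : 1 <= P by rewrite le_max lexx.
  have M1 : 1 <= M by rewrite le_max lexx.
  have hA0 : 0 <= A by apply: powR_ge0.
  have f00 : 0 <= f0 ^+ 2 by apply: sqr_ge0.
  have e00 : 0 <= eps ^+ 2 by apply: sqr_ge0.
  have h6 : `|F v| ^+ 2 <= 2 * f0 ^+ 2 + 8 * eps ^+ 2 * (P * M).
    apply: (le_trans h2); rewrite lerD2l.
    have hA : A <= Num.max 1 A by rewrite le_max lexx orbT.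
    have H : (1 + a `^ veps) ^+ 2 * a ^+ 2 <= 4 * (P * M) by lra.
    have -> : 8 * eps ^+ 2 * (P * M) = 2 * eps ^+ 2 * (4 * (P * M)) by ring.
    by rewrite ler_wpM2l // mulr_ge0.
  apply: (le_trans h6); apply: (le_trans _ (ler_wpM2r _ hT2)); last exact: le_trans M1.
  have PM1 : 1 <= P * M by rewrite -(mulr1 1) ler_pM.
  have H := ler_wpM2l f00 PM1; rewrite mulr1 in H.
  have -> : (8 * eps ^+ 2 + 2 * `|F 0| ^+ 2) * P * M = 8 * eps ^+ 2 * (P * M) + 2 * (f0 ^+ 2 * (P * M)).
    by rewrite /f0; ring.
  lra.
set d := `|iV (v - w)|.
set b := `|iV w|.
have d0 : 0 <= d by apply: normr_ge0.
have b0 : 0 <= b by apply: normr_ge0.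
set N := `|v| `^ q.
set M := Num.max 1 N.
have M1 : 1 <= M by rewrite le_max lexx.
have MN : N <= M by rewrite le_max lexx orbT.
have N0 : 0 <= N by apply: powR_ge0.
set D := d `^ q.
have D0 : 0 <= D by apply: powR_ge0.
have hb : b <= a + d.
  rewrite /b /a /d.
  have -> : iV w = iV v - iV (v - w) by rewrite linearB /= opprB addrC subrK.
  exact: ler_normB.
set s := a `^ veps.
set t := b `^ veps.
have s0 : 0 <= s by apply: powR_ge0.
have t0 : 0 <= t by apply: powR_ge0.
have hs : s ^+ 2 <= EV * N by rewrite /s sq //; apply: HV.
have ht : t ^+ 2 <= c * (EV * N + D).
  rewrite /t sq //.
  apply: (le_trans (ge0_ler_powR (ltW q0) _ _ hb)); rewrite ?nnegrE ?addr_ge0 //.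
  apply: (le_trans (@powR_conv R a d q q0 a0 d0)); rewrite ler_wpM2l ?powR_ge0 // lerD2r.
  exact: HV.
have hF := HF v w.
rewrite -/a -/b -/d -/s -/t in hF.
have e0 : 0 <= eps by [].
have hF2 : `|F v - F w| ^+ 2 <= eps ^+ 2 * (3 * (1 + s ^+ 2 + t ^+ 2)) * d ^+ 2.
  apply: (le_trans (lerXn2r 2 _ _ hF)); rewrite ?nnegrE //; first by rewrite !mulr_ge0 // !addr_ge0.
  rewrite !exprMn ler_wpM2r ?sqr_ge0 // ler_wpM2l ?sqr_ge0 //.
  have := sqr_ge0 (1 - s); have := sqr_ge0 (1 - t); have := sqr_ge0 (s - t); nra.
have hW : `|iW (F v - F w)| ^+ 2 <= EW * `|F v - F w| ^+ 2.
  by have := HW (F v - F w); rewrite !powR_mulrn ?normr_ge0.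
have hD : d `^ (2 + q) = D * d ^+ 2 by rewrite -pD.
rewrite hD.
apply: (le_trans hW); apply: (le_trans (ler_wpM2l EW0 hF2)).
have c0 : 0 <= c by lra.
have G : 1 + s ^+ 2 + t ^+ 2 <= 1 + (1 + c) * EV * N + c * D by lra.
have k0 : 0 <= 3 * eps ^+ 2 * EW by rewrite !mulr_ge0 ?sqr_ge0.
set T := 3 * eps ^+ 2 * EW * (1 + EV) * (1 + c) in hT1.
have I1 : 1 + (1 + c) * EV * N <= (1 + EV) * (1 + c) * M.
  have H1 : (1 + c) * EV * N <= (1 + c) * EV * M by rewrite ler_wpM2l // mulr_ge0 // addr_ge0.
  have H2 : 1 <= (1 + c) * M by rewrite -(mulr1 1) ler_pM //; lra.
  have -> : (1 + EV) * (1 + c) * M = (1 + c) * M + (1 + c) * EV * M by ring.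
  lra.
have I2 : c <= (1 + EV) * (1 + c).
  have -> : (1 + EV) * (1 + c) = 1 + c + EV * (1 + c) by ring.
  have : 0 <= EV * (1 + c) by rewrite mulr_ge0 // addr_ge0.
  lra.
have J : 3 * eps ^+ 2 * EW * (1 + s ^+ 2 + t ^+ 2) <= T * M + T * D.
  apply: (le_trans (ler_wpM2l k0 G)).
  have I3 : c * D <= (1 + EV) * (1 + c) * D by rewrite ler_wpM2r.
  have H : 1 + (1 + c) * EV * N + c * D <= (1 + EV) * (1 + c) * M + (1 + EV) * (1 + c) * D by lra.
  have -> : T * M + T * D = 3 * eps ^+ 2 * EW * ((1 + EV) * (1 + c) * M + (1 + EV) * (1 + c) * D).
    by rewrite /T; ring.
  by rewrite ler_wpM2l.
have -> : EW * (eps ^+ 2 * (3 * (1 + s ^+ 2 + t ^+ 2)) * d ^+ 2) = 3 * eps ^+ 2 * EW * (1 + s ^+ 2 + t ^+ 2) * d ^+ 2 by ring.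
have -> : theta * M * d ^+ 2 + theta * (D * d ^+ 2) = (theta * M + theta * D) * d ^+ 2 by ring.
rewrite ler_wpM2r ?sqr_ge0 //; apply: (le_trans J).
have M0 : 0 <= M by lra.
by apply: lerD; apply: ler_wpM2r.
Qed.
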